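(* Let $G$ be a finite graph with $n$ vertices and maximum degree $\Delta$, and let $k$ be an integer with $k>\min\{n,2\Delta\}+1$. Then $G$ can be determined up to isomorphism from $\mathcal{K}_k(G)$ by inspecting at most $(kn)^2$ vertices (colourings) of $\mathcal{K}_k(G)$, even without knowing the exact value of $k$.
   Context: All graphs are finite and simple. A $k$-colouring of $G$ is a map $c:V(G)\to\{1,\dots,k\}$ with $c(u)\neq c(v)$ for every edge $uv$. Given a $k$-colouring $c$, two distinct colours $i,j$, and a connected component $H$ of the subgraph of $G$ induced by $c^{-1}(\{i,j\})$, the Kempe swap on $H$ produces the colouring obtained from $c$ by exchanging colours $i$ and $j$ on $H$. The $k$-Kempe-recolouring graph $\mathcal{K}_k(G)$ has as vertices all $k$-colourings of $G$, two distinct colourings being adjacent if and only if one is obtained from the other by a single Kempe swap. *)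

(* Defs.v *)
From mathcomp Require Import all_boot.
Set Implicit Arguments. Unset Strict Implicit. Unset Printing Implicit Defensive.

(* A finite simple graph: vertex type T : finType, adjacency e : rel T,
   assumed symmetric and irreflexive where used. Colours {1..k} are 'I_k. *)

Section Graph.
Variables (T : finType) (e : rel T).

Definition maxdeg : nat := \max_(x : T) #|[set y | e x y]|.

Definition proper (k : nat) (c : {ffun T -> 'I_k}) : bool :=
  [forall x, forall y, e x y ==> (c x != c y)].

Definition colouring (k : nat) := {c : {ffun T -> 'I_k} | proper c}.

Definition kempe_comp (k : nat) (c : {ffun T -> 'I_k}) (i j : 'I_k) (x y : T) : bool :=
  [&& c x \in [:: i; j], c y \in [:: i; j] &
   connect (fun u w => [&& e u w, c u \in [:: i; j] & c w \in [:: i; j]]) x y].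

Definition kempe_swap (k : nat) (c : {ffun T -> 'I_k}) (i j : 'I_k) (x : T)
  : {ffun T -> 'I_k} :=
  [ffun y => if kempe_comp c i j x y then (if c y == i then j else i) else c y].

Definition kempe_adj (k : nat) (c d : colouring k) : bool :=
  (c != d) &&
  [exists i : 'I_k, exists j : 'I_k, exists x : T,
     [&& i != j, val c x \in [:: i; j] & val d == kempe_swap (val c) i j x]].

Definition iso_to (m : nat) (r : rel 'I_m) : Prop :=
  exists f : T -> 'I_m, bijective f /\ forall x y, e x y = r (f x) (f y).

End Graph.

(* Query procedures (decision trees) exploring an unknown graph whose
   vertices have an abstract type V: "Ask v f" inspects vertex v, receiving
   the list of its neighbours, and continues with f; "Out m r" outputs the
   graph ('I_m, r). *)
Inductive proc (V : Type) : Type :=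
| Out : forall m : nat, rel 'I_m -> proc V
| Ask : V -> (seq V -> proc V) -> proc V.

Fixpoint run (V : Type) (nb : V -> seq V) (p : proc V) : nat * {m : nat & rel 'I_m} :=
  match p with
  | Out m r => (0, existT _ m r)
  | Ask v f => let res := run nb (f (nb v)) in (res.1.+1, res.2)
  end.

(* Main.v *)
Require Import Defs.
From mathcomp Require Import all_boot zify.
Set Implicit Arguments. Unset Strict Implicit. Unset Printing Implicit Defensive.

Lemma pair_cases (X : eqType) (p q u v z : X) :
  u != v -> u \in [:: p; q] -> v \in [:: p; q] -> z \in [:: p; q] -> z = u \/ z = v.
Proof.
move=> uv; rewrite !inE => /orP[]/eqP Eu /orP[]/eqP Ev /orP[]/eqP Ez; subst;
  rewrite ?eqxx in uv; auto; by [].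
Qed.

Lemma pair_eqm (X : eqType) (p q a b u v : X) : u != v ->
  u \in [:: p; q] -> v \in [:: p; q] -> u \in [:: a; b] -> v \in [:: a; b] ->
  forall z, (z \in [:: p; q]) = (z \in [:: a; b]).
Proof.
move=> uv up vp ua va z; apply/idP/idP => hz.
- by case: (pair_cases uv up vp hz) => ->.
- by case: (pair_cases uv ua va hz) => ->.
Qed.

Lemma other_unique (X : eqType) (p q u w w' : X) :
  u \in [:: p; q] -> w \in [:: p; q] -> w' \in [:: p; q] -> w != u -> w' != u -> w' = w.
Proof.
move=> up wp w'p wu w'u.
have uw : u != w by rewrite eq_sym.
by case: (pair_cases uw up wp w'p) => // E; rewrite E eqxx in w'u.
Qed.

Lemma conn_step (T : finType) (r : rel T) x y : connect r x y -> y != x -> exists w, r x w.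
Proof.
move=> /connectP[[|w p] /= pth ->]; first by rewrite eqxx.
by case/andP: pth => h _ _; exists w.
Qed.

Section Decode.
Variables (V : eqType) (g : V -> seq V) (c0 : V).
Definition comm d f := has (fun h => h \in g f) (g d).
Definition flag := all (fun d => ~~ comm c0 d) (g c0).
Definition single d f := flag || comm d f.
Definition Sx := [seq d <- g c0 | single c0 d].
Definition same d d' := (d == d') || (d' \in g d).
Definition rep d := nth d Sx (find (same d) Sx).
Definition Rx := undup (map rep Sx).
Definition adjt u w := has (fun d1 => same u d1 && has (fun d2 => same w d2 &&
   all (fun f => (f == c0) || (f \notin g d2) || ~~ (single d1 f && single d2 f)) (g d1)) Sx) Sx.
Definition outrel : rel 'I_(size Rx) :=
  fun p q => (p != q) && adjt (nth c0 Rx p) (nth c0 Rx q).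
End Decode.

Fixpoint askall (V : Type) (l : seq V) (K : seq (seq V) -> proc V) : proc V :=
  match l with
  | [::] => K [::]
  | v :: l' => Ask v (fun a => askall l' (fun r => K (a :: r)))
  end.

Lemma run_askall (V : Type) (nb : V -> seq V) l K :
  run nb (askall l K) = ((size l + (run nb (K (map nb l))).1)%N, (run nb (K (map nb l))).2).
Proof.
elim: l K => [|v l IH] K /=; first by case: (run nb (K [::])).
by rewrite IH.
Qed.

Definition lookup (V : eqType) (keys : seq V) (vals : seq (seq V)) (v : V) :=
  nth [::] vals (index v keys).

Definition theP (V : eqType) (c0 : V) : proc V :=
  Ask c0 (fun L => askall L (fun A => askall (flatten A) (fun A2 =>
    let g := lookup (c0 :: L ++ flatten A) (L :: A ++ A2) in @Out V (size (Rx g c0)) (@outrel V g c0)))).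

Section Kempe.
Variables (T : finType) (e : rel T) (k : nat).
Hypothesis esym : symmetric e.
Hypothesis eirr : irreflexive e.
Implicit Types (c : {ffun T -> 'I_k}) (i j : 'I_k) (x y z : T).

Definition krel (c : {ffun T -> 'I_k}) (i j : 'I_k) : rel T :=
  fun u w => [&& e u w, c u \in [:: i; j] & c w \in [:: i; j]].

Lemma krel_sym c i j : symmetric (krel c i j).
Proof. by move=> u w; rewrite /krel esym; congr (_ && _); apply: andbC. Qed.

Lemma kcE c i j x y : kempe_comp e c i j x y =
  [&& c x \in [:: i; j], c y \in [:: i; j] & connect (krel c i j) x y].
Proof. by []. Qed.

Lemma kc_refl c i j x : c x \in [:: i; j] -> kempe_comp e c i j x x.
Proof. by move=> h; rewrite kcE h connect0. Qed.

Lemma kc_conn c i j x y z : kempe_comp e c i j x y -> kempe_comp e c i j x z ->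
  connect (krel c i j) y z.
Proof.
rewrite !kcE => /and3P[_ _ cxy] /and3P[_ _ cxz].
apply: connect_trans cxz.
by rewrite (sym_connect_sym (@krel_sym c i j)).
Qed.

Lemma kc_closed c i j x y z : kempe_comp e c i j x y -> connect (krel c i j) y z ->
  kempe_comp e c i j x z.
Proof.
rewrite !kcE => /and3P[cx cy cxy] cyz.
rewrite cx (connect_trans cxy cyz) andbT /=.
have czy : connect (krel c i j) z y by rewrite (sym_connect_sym (@krel_sym c i j)).
case: (eqVneq y z) => [<-//|yz].
by have [w /and3P[]] := conn_step czy yz.
Qed.

Lemma ksE c i j x y : kempe_swap e c i j x y =
  if kempe_comp e c i j x y then (if c y == i then j else i) else c y.
Proof. by rewrite ffunE. Qed.

Lemma ks_in c i j x y : kempe_comp e c i j x y -> kempe_swap e c i j x y \in [:: i; j].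
Proof. by rewrite ksE => ->; case: ifP; rewrite !inE eqxx ?orbT. Qed.

Lemma ks_ne c i j x y : i != j -> kempe_comp e c i j x y -> kempe_swap e c i j x y != c y.
Proof.
move=> ij h; rewrite ksE h; move: h; rewrite kcE => /and3P[_ cy _].
case: ifP => [/eqP->|]; first by rewrite eq_sym.
by move: cy; rewrite !inE => /orP[->//|/eqP->] _.
Qed.

Lemma ks_out c i j x y : ~~ kempe_comp e c i j x y -> kempe_swap e c i j x y = c y.
Proof. by rewrite ksE => /negbTE->. Qed.

Notation col := (colouring e k).

Lemma properP (c : {ffun T -> 'I_k}) :
  reflect (forall x y, e x y -> c x != c y) (Defs.proper e c).
Proof.
apply: (iffP forallP) => [H x y exy | H x].
  by move/forallP: (H x) => /(_ y); rewrite exy.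
by apply/forallP => y; apply/implyP; exact: H.
Qed.

Lemma colP (c : col) x y : e x y -> val c x != val c y.
Proof. exact: (properP _ (valP c)). Qed.

Lemma kadjP (c d : col) : kempe_adj c d -> c != d /\ exists i j x0,
  [/\ i != j, val c x0 \in [:: i; j] & val d = kempe_swap e (val c) i j x0].
Proof.
case/andP=> cd /existsP[i /existsP[j /existsP[x /and3P[ij cx /eqP dE]]]].
by split => //; exists i, j, x.
Qed.

Lemma kadj_diff (c d : col) i j x0 : i != j -> val c x0 \in [:: i; j] ->
  val d = kempe_swap e (val c) i j x0 ->
  forall y, (val d y != val c y) = kempe_comp e (val c) i j x0 y.
Proof.
move=> ij cx dE y; case h: kempe_comp.
  by rewrite dE ks_ne.
by rewrite dE ks_out ?h ?eqxx.
Qed.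

Lemma swap_memb (c d : col) i j x0 : i != j -> val c x0 \in [:: i; j] ->
  val d = kempe_swap e (val c) i j x0 ->
  forall u, (val d u \in [:: i; j]) = (val c u \in [:: i; j]).
Proof.
move=> ij cx dE u; case h: (kempe_comp e (val c) i j x0 u).
  by rewrite dE ks_in //; move: h; rewrite kcE => /and3P[].
by rewrite dE ks_out ?h.
Qed.

Lemma col_ext (c d : col) : (forall y, val c y = val d y) -> c = d.
Proof. by move=> h; apply: val_inj; apply/ffunP. Qed.

Lemma kadj_sym (c d : col) : kempe_adj c d -> kempe_adj d c.
Proof.
move=> /kadjP[cd [i [j [x0 [ij cx dE]]]]].
have mem := swap_memb ij cx dE.
have kE : forall y, kempe_comp e (val d) i j x0 y = kempe_comp e (val c) i j x0 y.
  move=> y; rewrite !kcE !mem; congr [&& _, _ & _].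
  by apply: eq_connect => u w; rewrite /krel !mem.
apply/andP; split; first by rewrite eq_sym.
apply/existsP; exists i; apply/existsP; exists j; apply/existsP; exists x0.
rewrite ij mem cx /=; apply/eqP/ffunP => y.
case h: (kempe_comp e (val c) i j x0 y).
- have hd : kempe_comp e (val d) i j x0 y by rewrite kE.
  have cy : val c y \in [:: i; j] by move: h; rewrite kcE => /and3P[].
  apply: (@other_unique _ i j (val d y)).
  + by rewrite mem.
  + exact: ks_in.
  + exact: cy.
  + exact: ks_ne.
  + by rewrite eq_sym (kadj_diff ij cx dE).
- by rewrite ks_out ?kE ?h // dE ks_out ?h.
Qed.

Definition smove (c d : col) x :=
  (forall y, y != x -> val d y = val c y) /\ val d x != val c x.
Definition smoveb (c d : col) x :=
  [forall y, (y != x) ==> (val d y == val c y)] && (val d x != val c x).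

Lemma smoveP (c d : col) x : reflect (smove c d x) (smoveb c d x).
Proof.
apply: (iffP andP) => [[/forallP H nx]|[H nx]]; split => //.
  by move=> y yx; apply/eqP; move: (H y); rewrite yx.
by apply/forallP => y; apply/implyP => yx; rewrite H.
Qed.

Lemma smove_uniq (c d : col) x x' : smove c d x -> smove c d x' -> x = x'.
Proof.
case=> h1 _ [_ n2]; apply/eqP; rewrite eq_sym; apply: contraNT n2 => x'x.
by rewrite h1 // eqxx.
Qed.

Lemma smove_nbr (c d : col) x y : smove c d x -> e x y -> val d y = val c y.
Proof.
case=> h _ exy; apply: h; apply: contraTneq exy => ->; by rewrite eirr.
Qed.

Lemma free_of_smove (c d : col) x : smove c d x -> forall y, e x y -> val c y != val d x.
Proof.
move=> sm y exy; rewrite -(smove_nbr sm exy) eq_sym; exact: colP.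
Qed.

Lemma smove_adj (c d : col) x : smove c d x -> kempe_adj c d.
Proof.
move=> sm; have [hd nx] := sm.
apply/andP; split.
  by apply/negP => /eqP cd; move: nx; rewrite cd eqxx.
apply/existsP; exists (val c x); apply/existsP; exists (val d x); apply/existsP; exists x.
rewrite eq_sym nx /= inE eqxx /=; apply/eqP/ffunP => y; rewrite ksE.
have compE : kempe_comp e (val c) (val c x) (val d x) x y = (y == x).
  case: (eqVneq y x) => [->|yx]; first by rewrite kc_refl // inE eqxx.
  apply/negP; rewrite kcE => /and3P[_ _ cxy].
  have [w /and3P[exw _ cw]] := conn_step cxy yx.
  move: cw; rewrite !inE => /orP[/eqP cw|/eqP cw].
    by move: (colP c exw); rewrite cw eqxx.
  by move: (free_of_smove sm exw); rewrite cw eqxx.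
rewrite compE; case: (eqVneq y x) => [->|yx]; first by rewrite eqxx.
by rewrite hd.
Qed.

Lemma recol_proper (c : col) x j : (forall y, e x y -> val c y != j) ->
  Defs.proper e [ffun y => if y == x then j else val c y].
Proof.
move=> H; apply/properP => u w euw; rewrite !ffunE.
case: (eqVneq u x) => [ux|ux]; case: (eqVneq w x) => [wx|wx].
- by move: euw; rewrite ux wx eirr.
- by rewrite eq_sym; apply: H; rewrite -ux.
- by apply: H; rewrite -wx esym.
- exact: colP.
Qed.

Lemma recol_ex (c : col) x j : (forall y, e x y -> val c y != j) -> j != val c x ->
  exists d : col, smove c d x /\ val d x = j.
Proof.
move=> H jx; exists (exist (fun g => Defs.proper e g) _ (recol_proper H)); rewrite /smove /= !ffunE eqxx.
by split => //; split => // y yx; rewrite ffunE (negbTE yx).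
Qed.

Lemma same_off_smove (c d d' : col) x : smove c d x -> smove c d' x -> d != d' ->
  smove d d' x.
Proof.
move=> [h1 n1] [h2 n2] dd; split => [y yx|]; first by rewrite h1 ?h2.
apply: contra dd => /eqP E; apply/eqP/col_ext => y.
case: (eqVneq y x) => [->//|yx]; by rewrite h1 ?h2.
Qed.

Lemma K1 (c d f : col) x : smove c d x -> kempe_adj c f -> kempe_adj d f ->
  forall y, y != x -> val f y = val c y.
Proof.
move=> sm; have [dc dx] := sm.
move=> /kadjP[cf [a [b [x1 [ab cx1 fE]]]]] /kadjP[df [p [q [x2 [pq dx2 fE2]]]]].
have hA := kadj_diff ab cx1 fE; have hB := kadj_diff pq dx2 fE2.
move=> v vx; apply/eqP/negPn/negP => fv.
have Av : kempe_comp e (val c) a b x1 v by rewrite -hA.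
have Bv : kempe_comp e (val d) p q x2 v by rewrite -hB (dc v vx).
have fin : forall y, kempe_comp e (val d) p q x2 y -> val f y \in [:: p; q].
  by move=> y hy; rewrite fE2 ks_in.
have din : forall y, kempe_comp e (val d) p q x2 y -> val d y \in [:: p; q].
  by move=> y; rewrite kcE => /and3P[].
case Ax: (kempe_comp e (val c) a b x1 x).
- have cxv := kc_conn Ax Av.
  have [w xw] := conn_step cxv vx.
  have Aw := kc_closed Ax (connect1 xw).
  move: xw => /and3P[exw cxab cwab].
  have wx : w != x by apply: contraTneq exw => ->; rewrite eirr.
  have cxw := colP c exw.
  have fw : val f w = val c x.
    apply: (@other_unique _ a b (val c w)) => //; first by rewrite fE ks_in.
    by rewrite hA.
  have fx : val f x = val c w.
    apply: (@other_unique _ a b (val c x)) => //; first by rewrite fE ks_in.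
      by rewrite eq_sym.
    by rewrite hA.
  have dwc : val d w = val c w by rewrite dc.
  have Bx : kempe_comp e (val d) p q x2 x.
    by rewrite -hB fx -dwc eq_sym colP.
  have Bw : kempe_comp e (val d) p q x2 w.
    by rewrite -hB fw dwc.
  have cwp : val c w \in [:: p; q] by rewrite -fx fin.
  have cxp : val c x \in [:: p; q] by rewrite -fw fin.
  have cwx : val c w != val c x by rewrite eq_sym.
  case: (pair_cases cwx cwp cxp (din _ Bx)) => E.
    by move: (colP d exw); rewrite E dwc eqxx.
  by move: dx; rewrite E eqxx.
- have fx : val f x = val c x by apply/eqP/negPn; rewrite hA Ax.
  have Bx : kempe_comp e (val d) p q x2 x by rewrite -hB fx eq_sym.
  have cxv := kc_conn Bx Bv.
  have [w /and3P[exw dxp dwp]] := conn_step cxv vx.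
  have wx : w != x by apply: contraTneq exw => ->; rewrite eirr.
  have cxp : val c x \in [:: p; q] by rewrite -fx fin.
  case: (pair_cases dx dxp cxp dwp) => E.
    by move: (colP d exw); rewrite E eqxx.
  by move: (colP c exw); rewrite -E dc // eqxx.
Qed.

Lemma big_edge (c d : col) i j x0 : i != j -> val c x0 \in [:: i; j] ->
  val d = kempe_swap e (val c) i j x0 -> ~ (exists x, smove c d x) ->
  exists w, [/\ kempe_comp e (val c) i j x0 w, e x0 w & val c w \in [:: i; j]].
Proof.
move=> ij cx dE nsm.
have hH := kadj_diff ij cx dE.
case: (boolP [exists y, (y != x0) && (val d y != val c y)]).
  move=> /existsP[y /andP[yx dy]].
  have Hy : kempe_comp e (val c) i j x0 y by rewrite -hH.
  have [w xw] := conn_step (kc_conn (kc_refl cx) Hy) yx.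
  exists w; split; last by case/and3P: xw.
    exact: kc_closed (kc_refl cx) (connect1 xw).
  by case/and3P: xw.
move=> /existsPn H; exfalso; apply: nsm; exists x0; split.
  move=> y yx; move: (H y); rewrite yx /= => /negPn/eqP //.
by rewrite hH kc_refl.
Qed.

Lemma K2 (c d f : col) : kempe_adj c d -> ~ (exists x, smove c d x) ->
  kempe_adj c f -> kempe_adj d f -> False.
Proof.
move=> cd nsd cf df.
case: (boolP [exists z, smoveb c f z]).
  move=> /existsP[z /smoveP sfz].
  have h := K1 sfz cd (kadj_sym df).
  apply: nsd; exists z; split => //.
  have [cnd _] := kadjP cd.
  apply: contra cnd => /eqP dz; apply/eqP/col_ext => y.
  case: (eqVneq y z) => [->//|yz]; by rewrite h.
move=> /existsPn nsf.
have nsf' : ~ (exists x, smove c f x).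
  by case=> x /smoveP; move: (nsf x) => /negP.
move: (cd) (cf) (df) => /kadjP[_ [i [j [x0 [ij cx0 dE]]]]]
  /kadjP[_ [a [b [x1 [ab cx1 fE]]]]] /kadjP[ndf [p [q [x2 [pq dx2 fE2]]]]].
have hH := kadj_diff ij cx0 dE; have hA := kadj_diff ab cx1 fE.
have hB := kadj_diff pq dx2 fE2.
have [w0 [Hw0 ew0 cw0]] := big_edge ij cx0 dE nsd.
have [w1 [Aw1 ew1 cw1]] := big_edge ab cx1 fE nsf'.
have H0 := kc_refl cx0; have A1 := kc_refl cx1.
have c0w : val c x0 != val c w0 := colP c ew0.
have c1w : val c x1 != val c w1 := colP c ew1.
have memH := swap_memb ij cx0 dE.
have inH : forall y, kempe_comp e (val c) i j x0 y -> val c y \in [:: i; j].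
  by move=> y; rewrite kcE => /and3P[].
have inA : forall y, kempe_comp e (val c) a b x1 y -> val c y \in [:: a; b].
  by move=> y; rewrite kcE => /and3P[].
have inB : forall y, kempe_comp e (val d) p q x2 y ->
    (val d y \in [:: p; q]) && (val f y \in [:: p; q]).
  by move=> y hy; rewrite fE2 ks_in // andbT; move: hy; rewrite kcE => /and3P[].
have pqij : forall h, kempe_comp e (val c) i j x0 h -> ~~ kempe_comp e (val c) a b x1 h ->
    forall z : 'I_k, (z \in [:: p; q]) = (z \in [:: i; j]).
  move=> h Hh nAh.
  have fh : val f h = val c h by apply/eqP/negPn; rewrite hA.
  have dh : val d h != val c h by rewrite hH.
  have Bh : kempe_comp e (val d) p q x2 h by rewrite -hB fh eq_sym.
  have /andP[dp cp] := inB _ Bh; rewrite fh in cp.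
  apply: (pair_eqm dh dp cp); first by rewrite memH inH.
  exact: inH.
case: (boolP ((val c x0 \in [:: a; b]) && (val c w0 \in [:: a; b]))).
- move=> /andP[c0a cw0a].
  have meq := pair_eqm c0w (inH _ H0) (inH _ Hw0) c0a cw0a.
  have relE : krel (val c) i j =2 krel (val c) a b.
    by move=> u w; rewrite /krel !meq.
  case: (boolP [exists v, kempe_comp e (val c) i j x0 v && kempe_comp e (val c) a b x1 v]).
  + move=> /existsP[v /andP[Hv Av]].
    have HA : forall y, kempe_comp e (val c) i j x0 y = kempe_comp e (val c) a b x1 y.
      move=> y; apply/idP/idP => hy.
        by apply: (kc_closed Av); rewrite -(eq_connect relE); exact: kc_conn Hv hy.
      by apply: (kc_closed Hv); rewrite (eq_connect relE); exact: kc_conn Av hy.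
    move: ndf => /negP; apply; apply/eqP/col_ext => y.
    case Hy: (kempe_comp e (val c) i j x0 y).
      apply: (@other_unique _ i j (val c y)); first exact: inH.
      * by rewrite meq fE ks_in // -HA.
      * by rewrite memH inH.
      * by rewrite hA -HA.
      * by rewrite hH.
    have fy : val f y = val c y by apply/eqP/negPn; rewrite hA -HA Hy.
    have dy : val d y = val c y by apply/eqP/negPn; rewrite hH Hy.
    by rewrite fy dy.
  + move=> /existsPn disj.
    have nA0 : ~~ kempe_comp e (val c) a b x1 x0 by move: (disj x0); rewrite H0.
    have nH1 : ~~ kempe_comp e (val c) i j x0 x1.
      by move: (disj x1); rewrite A1 andbT.
    have E := pqij _ H0 nA0.
    have fx0 : val f x0 = val c x0 by apply/eqP/negPn; rewrite hA.
    have B0 : kempe_comp e (val d) p q x2 x0 by rewrite -hB fx0 eq_sym hH.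
    have d1 : val d x1 = val c x1 by apply/eqP/negPn; rewrite hH.
    have B1 : kempe_comp e (val d) p q x2 x1 by rewrite -hB d1 hA.
    have relE2 : krel (val d) p q =2 krel (val c) i j.
      by move=> u w; rewrite /krel !E !memH.
    move: nH1 => /negP; apply; apply: (kc_closed H0).
    by rewrite -(eq_connect relE2); exact: kc_conn B0 B1.
- move=> nboth.
  have [h [Hh nah]] : exists h, kempe_comp e (val c) i j x0 h /\ val c h \notin [:: a; b].
    case: (boolP (val c x0 \in [:: a; b])) => c0a.
      by exists w0; split => //; move: nboth; rewrite c0a.
    by exists x0.
  have [u [Au niu]] : exists u, kempe_comp e (val c) a b x1 u /\ val c u \notin [:: i; j].
    case: (boolP (val c x1 \in [:: i; j])) => c1i; last by exists x1.
    case: (boolP (val c w1 \in [:: i; j])) => cw1i; last by exists w1.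
    have meq := pair_eqm c1w (inA _ A1) (inA _ Aw1) c1i cw1i.
    by move: nboth; rewrite !meq (inH _ H0) (inH _ Hw0).
  have nAh : ~~ kempe_comp e (val c) a b x1 h by apply: contra nah; exact: inA.
  have E := pqij _ Hh nAh.
  have nHu : ~~ kempe_comp e (val c) i j x0 u by apply: contra niu; exact: inH.
  have du : val d u = val c u by apply/eqP/negPn; rewrite hH.
  have Bu : kempe_comp e (val d) p q x2 u by rewrite -hB du hA.
  have /andP[cu _] := inB _ Bu; rewrite du E in cu.
  by move: niu; rewrite cu.
Qed.

Definition N x : {set T} := [set y | e x y].
Definition freeset (c : col) x : {set 'I_k} := [set j | [forall y, e x y ==> (val c y != j)]].

Lemma in_freeset (c : col) x j : (j \in freeset c x) = [forall y, e x y ==> (val c y != j)].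
Proof. by rewrite inE. Qed.

Lemma free_card (c : col) x : k - #|N x| <= #|freeset c x|.
Proof.
have sub : ~: freeset c x \subset (fun y => val c y) @: N x.
  apply/subsetP => j; rewrite !inE negb_forall => /existsP[y].
  rewrite negb_imply negbK => /andP[exy /eqP <-].
  by apply: imset_f; rewrite inE.
have h1 := subset_leq_card sub.
have h2 := leq_imset_card (fun y => val c y) (N x).
have h3 := cardsC (freeset c x); rewrite card_ord in h3.
have h4 := leq_trans h1 h2; clear sub h1 h2; lia.
Qed.

Lemma free_union (c : col) x x' : #|N x :|: N x'| < k ->
  exists j, forall y, (e x y || e x' y) -> val c y != j.
Proof.
move=> hlt; set img := (fun y => val c y) @: (N x :|: N x').
have h2 := leq_imset_card (fun y => val c y) (N x :|: N x').
have h3 := cardsC img; rewrite card_ord in h3.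
have h4 : #|img| < k := leq_ltn_trans h2 hlt.
have : ~: img != set0 by rewrite -card_gt0; clear h2; lia.
case/set0Pn => j; rewrite inE => nj; exists j => y hy.
apply: contra nj => /eqP <-; apply: imset_f; by rewrite !inE.
Qed.


Lemma third_ex (A : {set 'I_k}) (u v : 'I_k) : 3 <= #|A| -> exists l, [/\ l \in A, l != u & l != v].
Proof.
move=> h.
have h1 : 0 < #|A :\ u :\ v|.
  have := cardsD1 u A; have := cardsD1 v (A :\ u).
  have := leq_b1 (u \in A); have := leq_b1 (v \in A :\ u); move: (#|A|) h => a h; move: (#|A :\ u|) => b; move: (#|A :\ u :\ v|) => cc; move: (nat_of_bool (v \in A :\ u)) => n1; move: (nat_of_bool (u \in A)) => n2; lia.
move: h1; rewrite card_gt0 => /set0Pn[l]; rewrite !inE => /and3P[lv lu lA].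
by exists l.
Qed.

Lemma second_ex (A : {set 'I_k}) (u : 'I_k) : 2 <= #|A| -> exists l, l \in A /\ l != u.
Proof.
move=> h.
have h1 : 0 < #|A :\ u|.
  have := cardsD1 u A; have := leq_b1 (u \in A); move: (#|A|) h => a h; move: (#|A :\ u|) => b; move: (nat_of_bool (u \in A)) => n2; lia.
move: h1; rewrite card_gt0 => /set0Pn[l]; rewrite !inE => /andP[lu lA].
by exists l.
Qed.

Lemma smove_of_free (c : col) x j : (forall y, e x y -> val c y != j) -> j != val c x ->
  exists d, smove c d x /\ val d x = j.
Proof. exact: recol_ex. Qed.

Lemma free_own (c : col) x : forall y, e x y -> val c y != val c x.
Proof. by move=> y exy; rewrite eq_sym colP. Qed.

Lemma ks_symm c i j x : kempe_swap e c i j x = kempe_swap e c j i x.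
Proof.
have mem : forall z : 'I_k, (z \in [:: j; i]) = (z \in [:: i; j]).
  by move=> z; rewrite !inE orbC.
have cE : forall y, kempe_comp e c j i x y = kempe_comp e c i j x y.
  move=> y; rewrite !kcE !mem; congr [&& _, _ & _].
  by apply: eq_connect => u w; rewrite /krel !mem.
apply/ffunP => y; rewrite !ksE cE.
case h: (kempe_comp e c i j x y) => //.
move: h; rewrite kcE => /and3P[_ cy _]; move: cy; rewrite !inE.
by case/orP => /eqP ->; rewrite eqxx; case: eqVneq => // ->.
Qed.

Lemma ks_same c x : Defs.proper e c -> kempe_swap e c (c x) (c x) x = c.
Proof.
move=> _; apply/ffunP => y; rewrite ksE.
case h: (kempe_comp e c (c x) (c x) x y) => //.
move: h; rewrite kcE => /and3P[_ cy _]; move: cy; rewrite !inE orbb => /eqP ->.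
by rewrite eqxx.
Qed.

Lemma deg_bound (c : col) (l : seq col) : 0 < #|T| -> uniq l ->
  (forall d, d \in l -> kempe_adj c d) -> (size l).+1 <= #|T| * k.
Proof.
move=> T0 ul hl.
set s := [seq kempe_swap e (val c) (val c p.1) p.2 p.1 | p <- enum {: T * 'I_k}].
have ss : size s = #|T| * k by rewrite size_map -cardE card_prod card_ord.
have u : uniq (map val (c :: l)).
  rewrite map_inj_uniq; last exact: val_inj.
  rewrite /= ul andbT; apply/negP => /hl /andP[]; by rewrite eqxx.
rewrite -ss; suff : size (map val (c :: l)) <= size s by rewrite size_map.
apply: uniq_leq_size u _.
move=> v /mapP[d]; rewrite inE => /orP[/eqP -> ->|dl ->].
- move/card_gt0P: T0 => [x0 _].
  apply/mapP; exists (x0, val c x0); first by rewrite mem_enum.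
  by rewrite /= ks_same // (valP c).
- have [_ [i [j [x0 [ij cx dE]]]]] := kadjP (hl d dl).
  move: cx; rewrite !inE => /orP[/eqP ci|/eqP cj].
    apply/mapP; exists (x0, j); first by rewrite mem_enum.
    by rewrite /= ci.
  apply/mapP; exists (x0, i); first by rewrite mem_enum.
  by rewrite /= cj ks_symm.
Qed.

Section Hyp.
Hypothesis Hk : forall x y, #|N x :|: N y| + 2 <= k.

Lemma move_exists (c : col) x : exists d, smove c d x.
Proof.
have h := free_card c x; have := Hk x x; rewrite setUid => h2.
have [j [jf jx]] := @second_ex (freeset c x) (val c x) ltac:(lia).
move: jf; rewrite in_freeset => /forallP jf.
have [d [sm _]] := @recol_ex c x j (fun y exy => implyP (jf y) exy) jx.
by exists d.
Qed.

Definition nondeg := forall x, #|N x| + 3 <= k.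
Definition edgeless := forall x y, ~~ e x y.

Lemma deg_or : 0 < #|T| -> nondeg \/ (k = 2 /\ edgeless).
Proof.
move=> T0.
case: (boolP [exists x, exists y, e x y]).
- move=> /existsP[x0 /existsP[y0 e0]]; left => x.
  case: (boolP [exists y, e x y]).
  + move=> /existsP[y exy].
    have sub : x |: N x \subset N x :|: N y.
      apply/subsetP => z; rewrite !inE => /orP[/eqP->|->]; last by [].
      by rewrite esym exy orbT.
    have h1 := subset_leq_card sub.
    have h2 : x \notin N x by rewrite inE eirr.
    rewrite cardsU1 h2 in h1; have := Hk x y; lia.
  + move=> /existsPn nx.
    have -> : #|N x| = 0.
      by apply/eqP; rewrite cards_eq0; apply/eqP/setP => z; rewrite !inE (negbTE (nx z)).
    have := Hk x0 x0; rewrite setUid.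
    have : 0 < #|N x0| by rewrite card_gt0; apply/set0Pn; exists y0; rewrite inE.
    lia.
- move=> /existsPn ne.
  have edg : edgeless by move=> x y; move/existsPn: (ne x) => /(_ y).
  have N0 : forall x, #|N x| = 0.
    move=> x; apply/eqP; rewrite cards_eq0; apply/eqP/setP => z.
    by rewrite !inE (negbTE (edg x z)).
  have [x0 _] : exists x0 : T, true.
    by move/card_gt0P: T0 => [x _]; exists x.
  have := Hk x0 x0; rewrite setUid N0 => hk.
  case: (leqP 3 k) => h3.
    by left => x; rewrite N0.
  by right; split => //; lia.
Qed.

Lemma third_free (nd : nondeg) (c : col) x (j : 'I_k) :
  exists l, [/\ forall y, e x y -> val c y != l, l != val c x & l != j].
Proof.
have h := free_card c x; have := nd x => h2.
have [l [lf l1 l2]] := @third_ex (freeset c x) (val c x) j ltac:(lia).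
move: lf; rewrite in_freeset => /forallP lf.
by exists l; split => // y exy; exact: (implyP (lf y) exy).
Qed.

Lemma degen_smove (edg : edgeless) (c d : col) : kempe_adj c d -> exists x, smove c d x.
Proof.
move=> /kadjP[_ [i [j [x0 [ij cx dE]]]]]; have hH := kadj_diff ij cx dE.
exists x0; split; last by rewrite hH kc_refl.
move=> y yx; apply/eqP/negPn; rewrite hH; apply/negP => Hy.
have [w /and3P[ew _ _]] := conn_step (kc_conn (kc_refl cx) Hy) yx.
by move: (edg x0 w); rewrite ew.
Qed.

Lemma no3 (u v w : 'I_k) : k = 2 -> u != v -> u != w -> v != w -> False.
Proof.
move=> k2; rewrite -!val_eqE /=.
have := ltn_ord u; have := ltn_ord v; have := ltn_ord w.
move: (val u) (val v) (val w) => a b c0; rewrite k2.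
move=> hw hv hu /eqP h1 /eqP h2 /eqP h3; lia.
Qed.

Lemma degen_nocomm (k2 : k = 2) (edg : edgeless) (c d f : col) :
  kempe_adj c d -> kempe_adj c f -> kempe_adj d f -> False.
Proof.
move=> cd cf df.
have [x sm] := degen_smove edg cd; have [dc dx] := sm.
have h := K1 sm cf df.
have [cnf _] := kadjP cf; have [dnf _] := kadjP df.
have fx : val f x != val c x.
  apply: contra cnf => /eqP fx; apply/eqP/col_ext => y.
  by case: (eqVneq y x) => [->//|yx]; rewrite h.
have fdx : val f x != val d x.
  apply: contra dnf => /eqP fx'; apply/eqP/col_ext => y.
  by case: (eqVneq y x) => [->//|yx]; rewrite h // dc.
by apply: (no3 k2 dx); rewrite eq_sym; [exact: fdx | exact: fx].
Qed.

Variable nb : col -> seq col.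
Hypothesis nbP : forall c d : col, (d \in nb c) = kempe_adj c d.

Definition commc (d f : col) := has (fun h => h \in nb f) (nb d).
Definition smb (c d : col) := [exists x, smoveb c d x].

Lemma commc_sm (nd : nondeg) d f : kempe_adj d f -> commc d f = smb d f.
Proof.
move=> df; apply/idP/idP.
- move=> /hasP[h]; rewrite !nbP => dh fh.
  case: (boolP (smb d f)) => // /existsPn nsm; exfalso.
  apply: (K2 df _ dh fh) => -[x /smoveP]; move: (nsm x) => /negP //.
- move=> /existsP[x /smoveP sm].
  have [l [lf l1 l2]] := @third_free nd d x (val f x).
  have [h [smh hx]] := recol_ex lf l1.
  apply/hasP; exists h; rewrite nbP; first exact: smove_adj smh.
  apply: (@smove_adj _ _ x); split; last by rewrite hx.
  by move=> y yx; have [h1 _] := smh; have [h2 _] := sm; rewrite h1 // h2.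
Qed.

Lemma commc_degen (k2 : k = 2) (edg : edgeless) d f : kempe_adj d f -> commc d f = false.
Proof.
move=> df; apply/negP => /hasP[h]; rewrite !nbP => dh fh.
exact: (degen_nocomm k2 edg df dh fh).
Qed.

Section Correct.
Hypothesis T0 : 0 < #|T|.
Variable c0 : col.
Variable g : col -> seq col.
Variable key : pred col.
Hypothesis gE : forall v, key v -> g v = nb v.
Hypothesis key0 : key c0.
Hypothesis key1 : forall d, kempe_adj c0 d -> key d.
Hypothesis key2 : forall d f, kempe_adj c0 d -> kempe_adj d f -> key f.

Lemma gc0 d : (d \in g c0) = kempe_adj c0 d.
Proof. by rewrite gE // nbP. Qed.

Lemma gd d f : kempe_adj c0 d -> (f \in g d) = kempe_adj d f.
Proof. by move=> h; rewrite gE ?key1 // nbP. Qed.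

Lemma comm_eq d f : key d -> key f -> comm g d f = commc d f.
Proof. by move=> kd kf; rewrite /comm /commc !gE. Qed.

Lemma single_eq d f : key d -> key f -> kempe_adj d f -> single g c0 d f = smb d f.
Proof.
move=> kd kf df; rewrite /single.
case: (deg_or T0) => [nd | [k2 edg]].
- have -> : flag g c0 = false.
    move/card_gt0P: T0 => [x0 _].
    have [d0 sm0] := move_exists c0 x0.
    have a0 := smove_adj sm0.
    apply/negbTE/allPn; exists d0; first by rewrite gc0.
    rewrite negbK (comm_eq key0 (key1 a0)) (commc_sm nd a0).
    by apply/existsP; exists x0; apply/smoveP.
  by rewrite /= comm_eq // commc_sm.
- have -> : flag g c0 = true.
    apply/allP => d'; rewrite gc0 => a'.
    by rewrite (comm_eq key0 (key1 a')) (commc_degen k2 edg a').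
  have [x sm] := degen_smove edg df.
  by rewrite /=; symmetry; apply/existsP; exists x; apply/smoveP.
Qed.

Lemma memS d : (d \in Sx g c0) = kempe_adj c0 d && smb c0 d.
Proof.
rewrite mem_filter gc0; case a: (kempe_adj c0 d); rewrite ?andbF // andbT /=.
by rewrite (single_eq key0 (key1 a) a).
Qed.

Lemma Sx_sm d : d \in Sx g c0 -> kempe_adj c0 d /\ exists x, smove c0 d x.
Proof.
by rewrite memS => /andP[a /existsP[x /smoveP sm]]; split => //; exists x.
Qed.

Lemma sm_inS d x : smove c0 d x -> d \in Sx g c0.
Proof.
move=> sm; rewrite memS (smove_adj sm) /=.
by apply/existsP; exists x; apply/smoveP.
Qed.

Lemma sameE d d' x : smove c0 d x -> d \in Sx g c0 -> d' \in Sx g c0 ->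
  same g d d' = smoveb c0 d' x.
Proof.
move=> smd dS d'S.
have [ad _] := Sx_sm dS; have [ad' [x' sm']] := Sx_sm d'S.
rewrite /same gd //.
case: (eqVneq x' x) => [E|ne].
- subst x'.
  have -> : smoveb c0 d' x by apply/smoveP.
  case: (eqVneq d d') => //= ndd.
  exact: smove_adj (same_off_smove smd sm' ndd).
- apply/idP/idP.
  + case/orP => [/eqP E|a].
      by subst d'; move: ne; rewrite (smove_uniq sm' smd) eqxx.
    have h := K1 smd ad' a.
    by have [_ n'] := sm'; move: n'; rewrite h // eqxx.
  + by move/smoveP => sm2; move: ne; rewrite (smove_uniq sm' sm2) eqxx.
Qed.

Lemma rep_spec d x : smove c0 d x -> d \in Sx g c0 ->
  rep g c0 d \in Sx g c0 /\ smove c0 (rep g c0 d) x.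
Proof.
move=> sm dS.
have hs : has (same g d) (Sx g c0) by apply/hasP; exists d => //; rewrite /same eqxx.
have inS : rep g c0 d \in Sx g c0 by rewrite /rep mem_nth // -has_find.
split => //; apply/smoveP; rewrite -(sameE sm dS inS).
exact: nth_find.
Qed.

Lemma rep_eq d d' x : smove c0 d x -> smove c0 d' x -> d \in Sx g c0 -> d' \in Sx g c0 ->
  rep g c0 d = rep g c0 d'.
Proof.
move=> smd smd' dS d'S; rewrite /rep.
have -> : find (same g d) (Sx g c0) = find (same g d') (Sx g c0).
  by apply: eq_in_find => z zS; rewrite (sameE smd) // (sameE smd').
apply: set_nth_default; rewrite -has_find; apply/hasP; exists d' => //.
by rewrite /same eqxx.
Qed.

Definition dsel x := nth c0 (Sx g c0) (find (fun d => smoveb c0 d x) (Sx g c0)).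

Lemma dsel_spec x : dsel x \in Sx g c0 /\ smove c0 (dsel x) x.
Proof.
have [d sm] := move_exists c0 x.
have hs : has (fun d => smoveb c0 d x) (Sx g c0).
  by apply/hasP; exists d; [exact: sm_inS sm | apply/smoveP].
split; first by rewrite /dsel mem_nth // -has_find.
by apply/smoveP; exact: (nth_find c0 hs).
Qed.

Definition repx x := rep g c0 (dsel x).

Lemma repx_spec x : repx x \in Sx g c0 /\ smove c0 (repx x) x.
Proof. by have [h1 h2] := dsel_spec x; exact: rep_spec. Qed.

Lemma repx_in x : repx x \in Rx g c0.
Proof. by rewrite mem_undup; apply: map_f; case: (dsel_spec x). Qed.

Lemma Rx_repx u : u \in Rx g c0 -> exists x, u = repx x.
Proof.
rewrite mem_undup => /mapP[d dS ->].
have [_ [x sm]] := Sx_sm dS; exists x.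
by have [h1 h2] := dsel_spec x; exact: rep_eq sm h2 dS h1.
Qed.

Lemma repx_inj x y : repx x = repx y -> x = y.
Proof.
move=> E; have [_ s1] := repx_spec x; have [_ s2] := repx_spec y.
by rewrite E in s1; exact: smove_uniq s1 s2.
Qed.

Lemma adjtE x y : x != y -> adjt g c0 (repx x) (repx y) = e x y.
Proof.
move=> xy.
have [uS smu] := repx_spec x; have [wS smw] := repx_spec y.
apply/idP/idP.
- move=> /hasP[d1 d1S /andP[s1 /hasP[d2 d2S /andP[s2 /allP H]]]].
  rewrite (sameE smu uS d1S) in s1; rewrite (sameE smw wS d2S) in s2.
  move/smoveP: s1 => sm1; move/smoveP: s2 => sm2.
  have [h1 n1] := sm1; have [h2 n2] := sm2.
  have [a1 _] := Sx_sm d1S; have [a2 _] := Sx_sm d2S.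
  case: (boolP (e x y)) => // nexy; exfalso.
  have yx : y != x by rewrite eq_sym.
  have free : forall z, e y z -> val d1 z != val d2 y.
    move=> z eyz; have zx : z != x.
      by apply: contraTneq eyz => ->; rewrite esym (negbTE nexy).
    by rewrite h1 // (free_of_smove sm2 eyz).
  have ne : val d2 y != val d1 y by rewrite h1.
  have [f [smf fy]] := recol_ex free ne.
  have [hf nf] := smf.
  have af1 := smove_adj smf.
  have sm2f : smove d2 f x.
    split.
      move=> z zx; case: (eqVneq z y) => [->//|zy].
      by rewrite hf // h1 // h2.
    by rewrite hf // h2 // eq_sym.
  have af2 := smove_adj sm2f.
  move: (H f); rewrite gd // af1 => /(_ isT).
  have -> : (f == c0) = false.
    apply/negbTE; apply: contra n1 => /eqP E.
    by rewrite -E hf // eq_sym.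
  rewrite gd // af2 /=.
  rewrite (single_eq (key1 a1) (key2 a1 af1) af1).
  rewrite (single_eq (key1 a2) (key2 a2 af2) af2).
  have -> : smb d1 f by apply/existsP; exists y; apply/smoveP.
  by have -> : smb d2 f by apply/existsP; exists x; apply/smoveP.
- move=> exy.
  have hlt : #|N x :|: N y| < k by have := Hk x y; lia.
  have [a ha] := free_union c0 hlt.
  have ax : a != val c0 x by rewrite eq_sym; apply: ha; rewrite esym exy orbT.
  have ay : a != val c0 y by rewrite eq_sym; apply: ha; rewrite exy.
  have [d1 [sm1 d1x]] := @recol_ex c0 x a (fun z ez => ha z (introT orP (or_introl ez))) ax.
  have [d2 [sm2 d2y]] := @recol_ex c0 y a (fun z ez => ha z (introT orP (or_intror ez))) ay.
  have d1S := sm_inS sm1; have d2S := sm_inS sm2.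
  have a1 := smove_adj sm1; have a2 := smove_adj sm2.
  apply/hasP; exists d1 => //; rewrite (sameE smu uS d1S).
  have -> /= : smoveb c0 d1 x by apply/smoveP.
  apply/hasP; exists d2 => //; rewrite (sameE smw wS d2S).
  have -> /= : smoveb c0 d2 y by apply/smoveP.
  apply/allP => f; rewrite gd // => af1.
  case: (eqVneq f c0) => //= fnc.
  case fd2 : (f \in g d2) => //=.
  move: fd2; rewrite gd // => af2.
  rewrite (single_eq (key1 a1) (key2 a1 af1) af1).
  rewrite (single_eq (key1 a2) (key2 a2 af2) af2).
  apply/negP => /andP[/existsP[z /smoveP [hz nz]] /existsP[w /smoveP [hw nw]]].
  have [h1 n1] := sm1; have [h2 n2] := sm2.
  have yx : y != x by apply: contraTneq exy => ->; rewrite eirr.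
  have Fx : (z == x) || (w == x).
    case: (boolP ((z == x) || (w == x))) => // /norP[zx wx]; exfalso.
    move: ax; rewrite -d1x -(hz x) 1?eq_sym // (hw x) 1?eq_sym //.
    by rewrite (h2 x) ?eqxx // eq_sym.
  have Fy : (z == y) || (w == y).
    case: (boolP ((z == y) || (w == y))) => // /norP[zy wy]; exfalso.
    move: ay; rewrite -d2y -(hw y) 1?eq_sym // (hz y) 1?eq_sym //.
    by rewrite (h1 y) ?eqxx.
  case: (eqVneq z x) => [zx|zx].
  + subst z.
    have wy : w = y by move: Fy; rewrite eq_sym (negbTE yx) /= => /eqP.
    subst w.
    move/eqP: fnc; apply; apply/col_ext => v.
    case: (eqVneq v x) => [->|vx].
      by rewrite hw // h2.
    case: (eqVneq v y) => [->|vy].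
      by rewrite hz // h1.
    by rewrite hz // h1.
  + have wx : w = x by move: Fx; rewrite (negbTE zx) /= => /eqP.
    subst w.
    have zy : z = y by move: Fy; rewrite [x == y]eq_sym (negbTE yx) orbF => /eqP.
    subst z.
    have fx : val f x = a by rewrite hz // d1x.
    have fy : val f y = a by rewrite hw // d2y.
    by move: (colP f exy); rewrite fx fy eqxx.
Qed.

Lemma iso_main : iso_to e (@outrel _ g c0).
Proof.
have hphi : forall x, index (repx x) (Rx g c0) < size (Rx g c0).
  by move=> x; rewrite index_mem repx_in.
have phinj : forall x y, index (repx x) (Rx g c0) = index (repx y) (Rx g c0) -> x = y.
  move=> x y E; apply: repx_inj.
  by rewrite -(nth_index c0 (repx_in x)) E nth_index // repx_in.
exists (fun x => Ordinal (hphi x)); split.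
- apply: inj_card_bij.
    by move=> x y /(congr1 val) /= /phinj.
  rewrite card_ord.
  have -> : #|T| = size (map repx (enum T)) by rewrite size_map cardE.
  apply: uniq_leq_size; first exact: undup_uniq.
  move=> u /Rx_repx [x ->]; apply: map_f; by rewrite mem_enum.
- move=> x y; rewrite /outrel /=.
  case: (eqVneq x y) => [->|xy]; first by rewrite eirr eqxx.
  have -> /= : Ordinal (hphi x) != Ordinal (hphi y).
    by apply: contra xy => /eqP/(congr1 val) /= /phinj ->.
  by rewrite !nth_index ?repx_in // adjtE.
Qed.

End Correct.

End Hyp.

End Kempe.

Lemma lookup_map (V : eqType) (nb : V -> seq V) (keys : seq V) v :
  v \in keys -> lookup keys (map nb keys) v = nb v.
Proof. by move=> h; rewrite /lookup (nth_map v) ?index_mem // nth_index. Qed.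

Lemma flatten_bound (V : eqType) (nb : V -> seq V) (s : seq V) B :
  (forall d, d \in s -> (size (nb d)).+1 <= B) -> size (flatten (map nb s)) + size s <= size s * B.
Proof.
elim: s => [|x s IH] //= H.
rewrite size_cat.
have h1 := H x (mem_head _ _).
have h2 := IH (fun d hd => H d (@mem_behead _ (x :: s) d hd)).
rewrite mulSn; lia.
Qed.

Theorem theorem1p7 :
  exists P : forall V : eqType, V -> proc V,
  forall (T : finType) (e : rel T),
    symmetric e -> irreflexive e -> 0 < #|T| ->
  forall k : nat, minn #|T| (2 * maxdeg e) + 1 < k ->
  forall nb : colouring e k -> seq (colouring e k),
    (forall c, uniq (nb c) /\ (forall d, (d \in nb c) = kempe_adj c d)) ->
  forall c0 : colouring e k,
    (run nb (P _ c0)).1 <= (k * #|T|) ^ 2 /\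
    iso_to e (projT2 (run nb (P _ c0)).2).
Proof.
exists theP => T e esym eirr T0 k hk nb nbspec c0.
have nbP : forall c d, (d \in nb c) = kempe_adj c d by move=> c d; case: (nbspec c).
have Hk : forall x y, #|N e x :|: N e y| + 2 <= k.
  move=> x y.
  have h1 := max_card (mem (N e x :|: N e y)).
  have h2 := cardsU (N e x) (N e y).
  have h3 : #|N e x| <= maxdeg e by rewrite /maxdeg; exact: (@leq_bigmax T (fun z => #|[set y | e z y]|) x).
  have h4 : #|N e y| <= maxdeg e by rewrite /maxdeg; exact: (@leq_bigmax T (fun z => #|[set w | e z w]|) y).
  have h5 : #|N e x :|: N e y| <= minn #|T| (2 * maxdeg e).
    rewrite leq_min h1 /=; lia.
  lia.
rewrite /theP /= !run_askall /=.
set L := nb c0.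
set A := map nb L.
set keys := c0 :: L ++ flatten A.
have valsE : L :: A ++ map nb (flatten A) = map nb keys by rewrite /keys /= map_cat.
split.
- have hL : (size L).+1 <= #|T| * k.
    by apply: (deg_bound (c := c0) T0 (proj1 (nbspec c0))) => d; rewrite nbP.
  have hF : size (flatten A) + size L <= size L * (#|T| * k).
    apply: flatten_bound => d _.
    by apply: (deg_bound (c := d) T0 (proj1 (nbspec d))) => f; rewrite nbP.
  rewrite addn0; move: (size L) (size (flatten A)) hL hF => a b hL hF.
  have N1 : 1 <= #|T| * k by lia.
  rewrite mulnC; move: (#|T| * k) N1 hL hF => n N1 hL hF.
  have h : a * n <= (n - 1) * n by apply: leq_mul => //; lia.
  have h2 : (n - 1) * n + 1 <= n ^ 2.
    rewrite mulnBl mul1n (expnS n 1) expn1.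
    move: (n * n) (leq_pmulr n N1) => m hm; lia.
  lia.
- apply: (iso_main esym eirr Hk nbP T0 (key := fun v => v \in keys)).
  + by move=> v hv; rewrite valsE lookup_map.
  + by rewrite /keys mem_head.
  + by move=> d ad; rewrite /keys inE mem_cat -/L nbP ad orbT.
  + move=> d f ad af; rewrite /keys inE mem_cat; apply/orP; right; apply/orP; right.
    apply/flattenP; exists (nb d); last by rewrite nbP.
    by apply: map_f; rewrite /L nbP.
Qed.
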